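(* Let $G$ be a finite group. Then $G$ is a nested GVZ-group if and only if $U(G/N)>1$ for every proper normal subgroup $N$ of $G$.
   Context: All groups are finite. For $\chi\in\mathrm{Irr}(G)$, the center of $\chi$ is $Z(\chi)=\{g\in G : |\chi(g)|=\chi(1)\}$. A group is nested if for any two of its irreducible characters $\chi,\psi$ either $Z(\chi)\le Z(\psi)$ or $Z(\psi)\le Z(\chi)$. A group is a GVZ-group if every irreducible character vanishes on the complement of its center. For a group $H$ and a normal subgroup $M$ of $H$, $\mathrm{Irr}(H\mid M)$ is the set of $\chi\in\mathrm{Irr}(H)$ with $M\not\le\ker(\chi)$, and $V(H\mid M)$ is the subgroup generated by all $h\in H$ such that $\chi(h)\neq 0$ for some $\chi\in\mathrm{Irr}(H\mid M)$ (with $V(H\mid 1)=1$). For a normal subgroup $L$ of $H$, $U(H\mid L)$ is the product of all normal subgroups $M$ of $H$ with $V(H\mid M)\le L$, and $U(H)=U(H\mid Z(H))$. Here $U(G/N)$ is computed in the group $H=G/N$. *)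

(* Defs.v *)
From HB Require Import structures.
From mathcomp Require Import all_boot all_order all_algebra all_fingroup all_solvable all_field all_character.
Set Implicit Arguments. Unset Strict Implicit. Unset Printing Implicit Defensive.
Import Order.TTheory GRing.Theory Num.Theory.

Local Open Scope ring_scope.

Section Defs.
Variable gT : finGroupType.

Definition chi_center (H : {group gT}) (i : Iirr H) : {set gT} :=
  [set g in H | (`|'chi_i g| == 'chi_i 1%g)%R].

Definition nested (H : {group gT}) : Prop :=
  forall i j : Iirr H,
    (chi_center i \subset chi_center j) \/ (chi_center j \subset chi_center i).

Definition GVZ (H : {group gT}) : Prop :=
  forall (i : Iirr H) (g : gT), g \in H -> g \notin chi_center i -> ('chi_i g = 0)%R.

Definition in_Irr_rel (H M : {group gT}) (i : Iirr H) : bool :=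
  ~~ (M \subset cfker 'chi_i).

Definition V_rel (H M : {group gT}) : {set gT} :=
  (<<[set h in H | [exists i : Iirr H, in_Irr_rel M i && ('chi_i h != 0)%R]]>>)%g.

(* U(H | L) : product (= join) of all normal M of H with V(H|M) <= L *)
Definition U_rel (H : {group gT}) (L : {set gT}) : {set gT} :=
  (<< \bigcup_(M : {group gT} | (M <| H) && (V_rel H M \subset L)) M >>)%g.

Definition U_of (H : {group gT}) : {set gT} := U_rel H 'Z(H)%g.

End Defs.

(* Main.v *)
Require Import Defs.
From HB Require Import structures.
From mathcomp Require Import all_boot all_order all_algebra all_fingroup all_solvable all_field all_character.
Set Implicit Arguments. Unset Strict Implicit. Unset Printing Implicit Defensive.
Import Order.TTheory GRing.Theory Num.Theory.
Local Open Scope ring_scope.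

Section Aux.
Variable gT : finGroupType.
Implicit Types (G H : {group gT}).

Lemma chi_centerE G (i : Iirr G) : chi_center i = ('Z('chi_i))%CF.
Proof.
apply/setP=> x; rewrite inE; case Gx: (x \in G) => /=.
  by rewrite irr_cfcenterE.
apply/esym/negbTE; apply: contraFN Gx; exact: (subsetP (cfcenter_sub _)).
Qed.

Lemma center_sub_chi_center G (i : Iirr G) : ('Z(G))%g \subset chi_center i.
Proof. by rewrite chi_centerE -cap_cfcenter_irr (bigcap_inf i). Qed.

Lemma chi_center_comm G (i : Iirr G) :
  ([~: chi_center i, G] \subset cfker 'chi_i)%g.
Proof.
have sZG : chi_center i \subset G by rewrite chi_centerE cfcenter_sub.
have nKG : (G \subset 'N(cfker 'chi_i))%g by rewrite normal_norm ?cfker_normal.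
rewrite -quotient_cents2 ?(subset_trans sZG) // chi_centerE.
apply: subset_trans (cfcenter_subset_center 'chi_i) _.
exact: subsetIr.
Qed.

Lemma chi_center_nz G (i : Iirr G) x : x \in chi_center i -> 'chi_i x != 0.
Proof.
rewrite inE => /andP[_ /eqP h]; apply/eqP => h0.
by move: h; rewrite h0 normr0 => /esym/eqP; rewrite (negbTE (irr1_neq0 i)).
Qed.

Lemma U_of_neq1 H (M : {group gT}) :
  (M <| H)%g -> (M :!=: 1)%g -> (V_rel H M \subset 'Z(H))%g -> (U_of H != 1)%g.
Proof.
move=> nMH ntM sV; apply: contraNneq ntM => U1.
have sMU : (M \subset U_of H)%g.
  by rewrite /U_of /U_rel sub_gen // (bigcup_sup M) // nMH sV.
by apply/eqP/trivgP; rewrite -U1.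
Qed.

Lemma fwd H : (H :!=: 1)%g -> nested H -> GVZ H -> (U_of H != 1)%g.
Proof.
move=> ntH hN hG.
have suppZ : forall (i : Iirr H) h, h \in H -> 'chi_i h != 0 -> h \in chi_center i.
  move=> i h Hh nz; apply: contraR nz => nh; apply/eqP; exact: hG.
have [i0 hi0|none] := pickP (fun i : Iirr H => ~~ (chi_center i \subset 'Z(H))%g).
  pose i1 := [arg min_(i < i0 | ~~ (chi_center i \subset 'Z(H))%g) #|chi_center i|].
  have : ~~ (chi_center i1 \subset 'Z(H))%g /\
     (forall j : Iirr H, ~~ (chi_center j \subset 'Z(H))%g -> #|chi_center i1| <= #|chi_center j|)%N.
    rewrite /i1; case: (@arg_minnP _ i0 (fun i : Iirr H => ~~ (chi_center i \subset 'Z(H))%g) (fun i : Iirr H => #|chi_center i|) hi0) => j jP jmin.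
    by split.
  move=> [i1P i1min].
  have sZH : (chi_center i1 \subset H)%g by rewrite chi_centerE cfcenter_sub.
  have nZH : (H \subset 'N(chi_center i1))%g.
    by rewrite chi_centerE normal_norm ?cfcenter_normal.
  apply: (@U_of_neq1 H [group of [~: chi_center i1, H]%g]) => /=.
  - rewrite chi_centerE; apply/andP; split.
      by rewrite commg_subr (subset_trans (cfcenter_sub _)) ?normG.
    by rewrite normsR ?normG // -chi_centerE.
  - apply: contra i1P => /eqP/commG1P cZ.
    by rewrite subsetI sZH.
  - rewrite gen_subG; apply/subsetP => h; rewrite inE => /andP[Hh /existsP[i /andP[ki nz]]].
    have hi := suppZ i h Hh nz.
    have [sub|nsub] := boolP (chi_center i \subset 'Z(H))%g; first exact: (subsetP sub).
    exfalso; move: ki; rewrite /in_Irr_rel; apply/negP; rewrite negbK.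
    have s1 : (chi_center i1 \subset chi_center i)%g.
      case: (hN i1 i) => // s2.
      have := i1min i nsub => le; have : chi_center i == chi_center i1.
        by rewrite eqEcard s2 le.
      by move/eqP->.
    exact: subset_trans (commSg _ s1) (chi_center_comm i).
apply: (@U_of_neq1 H H) => //.
rewrite gen_subG; apply/subsetP => h; rewrite inE => /andP[Hh /existsP[i /andP[ki nz]]].
have := none i; rewrite /= => /negbFE sub.
exact: (subsetP sub) (suppZ i h Hh nz).
Qed.

Lemma center_mod G (N : {group gT}) (nsNG : (N <| G)%g) (i : Iirr (G / N)%G) x :
  x \in G -> (x \in chi_center (@mod_Iirr _ G N i)) = (coset N x \in chi_center i).
Proof.
move=> Gx; rewrite !inE Gx mem_quotient // mod_IirrE // cfModE // cfMod1.
by [].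
Qed.

Lemma nested_quo G (N : {group gT}) : (N <| G)%g -> nested G -> nested (G / N)%G.
Proof.
move=> nsNG hN i j.
have sub : forall i j : Iirr (G / N)%G,
    (chi_center (@mod_Iirr _ G N i) \subset chi_center (@mod_Iirr _ G N j))%g ->
    (chi_center i \subset chi_center j)%g.
  move=> i1 j1 s; apply/subsetP => y yi.
  have := yi; rewrite inE => /andP[/morphimP[x Nx Gx yE] _]; subst y.
  change (coset N x \in chi_center j1); move: yi.
  change (coset N x \in chi_center i1 -> coset N x \in chi_center j1).
  by rewrite -!(center_mod nsNG) // => /(subsetP s).
by case: (hN (@mod_Iirr _ G N i) (@mod_Iirr _ G N j)) => s; [left|right]; apply: sub.
Qed.

Lemma GVZ_quo G (N : {group gT}) : (N <| G)%g -> GVZ G -> GVZ (G / N)%G.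
Proof.
move=> nsNG hG i y /morphimP[x Nx Gx ->].
change (coset N x \notin chi_center i -> 'chi_i (coset N x) = 0).
move=> nc.
have := hG (@mod_Iirr _ G N i) x Gx; rewrite center_mod // mod_IirrE // cfModE //.
exact.
Qed.

End Aux.

Section Aux2.
Variable gT : finGroupType.
Implicit Types (G H : {group gT}).

Lemma U_of_witness H : (U_of H != 1)%g ->
  exists M : {group gT}, [/\ (M <| H)%g, (V_rel H M \subset 'Z(H))%g & (M :!=: 1)%g].
Proof.
move=> hU.
have [M /andP[/andP[a b] c]|none] :=
  pickP [pred M : {group gT} | (M <| H)%g && (V_rel H M \subset 'Z(H))%g && (M :!=: 1)%g].
  by exists M.
exfalso; move/negP: hU; apply; apply/eqP/trivgP.
rewrite /U_of /U_rel gen_subG; apply/bigcupsP => M /andP[nM sV].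
by have := none M; rewrite /= nM sV /= => /negbFE/eqP->.
Qed.

Lemma key_quo G (N : {group gT}) (nsNG : (N <| G)%g) (M : {group coset_of N})
  (hV : (V_rel (G / N)%G M \subset 'Z(G / N))%g) (k : Iirr G)
  (kerk : (N \subset cfker 'chi_k)%g)
  (hM : ~~ (M \subset cfker 'chi_(quo_Iirr N k))%g) g :
  g \in G -> 'chi_k g != 0 ->
  forall l : Iirr G, (N \subset cfker 'chi_l)%g -> g \in chi_center l.
Proof.
move=> Gg nz l kerl.
have gV : coset N g \in V_rel (G / N)%G M.
  apply: mem_gen; rewrite inE mem_quotient //=; apply/existsP; exists (quo_Iirr N k).
  by rewrite /in_Irr_rel hM /= quo_IirrE // cfQuoE.
have := subsetP (center_sub_chi_center (quo_Iirr N l)) _ (subsetP hV _ gV).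
by rewrite !inE Gg mem_quotient //= quo_IirrE // cfQuoE // cfQuo1.
Qed.

End Aux2.

Section Aux3.
Variable gT : finGroupType.
Implicit Types (G H : {group gT}).

Lemma conv_key G
  (hU : forall N : {group gT}, (N <| G)%g -> N \proper G -> (U_of (G / N)%G != 1)%g)
  (i j : Iirr G) :
  (forall g, g \in G -> 'chi_i g != 0 -> g \in chi_center i /\ g \in chi_center j) \/
  (forall g, g \in G -> 'chi_j g != 0 -> g \in chi_center i /\ g \in chi_center j).
Proof.
pose N := [group of (cfker 'chi_i :&: cfker 'chi_j)%g].
have nsNG : (N <| G)%g by rewrite normalI ?cfker_normal.
have kNi : (N \subset cfker 'chi_i)%g by rewrite subsetIl.
have kNj : (N \subset cfker 'chi_j)%g by rewrite subsetIr.
have [prop|nprop] := boolP (N \proper G); last first.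
  have eNG : (N :=: G)%g.
    by apply/eqP; rewrite eqEproper (normal_sub nsNG) nprop.
  left => g Gg _.
  have kc : forall k : Iirr G, (cfker 'chi_k \subset chi_center k)%g.
    by move=> k; rewrite chi_centerE normal_sub ?cfker_center_normal.
  by split; apply: (subsetP (kc _)); [apply: (subsetP kNi) | apply: (subsetP kNj)]; rewrite eNG.
have [M [nM sV ntM]] := U_of_witness (hU N nsNG prop).
have : ~~ (M \subset cfker 'chi_(quo_Iirr N i))%g \/ ~~ (M \subset cfker 'chi_(quo_Iirr N j))%g.
  apply/orP; rewrite -negb_and; apply: contra ntM => /andP[si sj].
  have : (M \subset cfker 'chi_(quo_Iirr N i) :&: cfker 'chi_(quo_Iirr N j))%g.
    by rewrite subsetI si sj.
  rewrite !quo_IirrE // !cfker_quo // -quotientGI // trivg_quotient.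
  by move/trivgP->.
case=> hM; [left|right] => g Gg nz.
  by split; apply: (key_quo nsNG sV kNi hM Gg nz).
by split; apply: (key_quo nsNG sV kNj hM Gg nz).
Qed.

End Aux3.

Theorem theoremI (gT : finGroupType) (G : {group gT}) :
  (nested G /\ GVZ G) <->
  (forall N : {group gT}, (N <| G)%g -> N \proper G -> U_of (G / N)%G != 1%g).
Proof.
split.
  move=> [hN hG] N nsNG prop; apply: fwd; last exact: GVZ_quo.
    apply: contraNneq (proper_subn prop) => e.
    by rewrite -(quotient_sub1 (normal_norm nsNG)) e subxx.
  exact: nested_quo.
move=> hU; split.
  move=> i j; case: (conv_key hU i j) => h; [left|right]; apply/subsetP => x xi;
    have Gx : x \in G by move: xi; rewrite inE => /andP[].
    exact: (h x Gx (chi_center_nz xi)).2.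
  exact: (h x Gx (chi_center_nz xi)).1.
move=> i g Gg ng; apply/eqP; apply: contraR ng => nz.
by case: (conv_key hU i i) => h; exact: (h g Gg nz).1.
Qed.
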